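(* Let $0<T\le 1$ and let $(f_{n,m})$, $(g_{n,m})$ ($n\in\mathbb{Z}_+$, $m\in\mathbb{Z}$) be coefficient arrays. Then $$\Big|\sum_{n,m}f_{n,m}g_{n,m}\Big|\lesssim T\,|||f|||_{0,\frac12;T}\,|||g|||_{0,\frac12;T},$$ with an absolute implicit constant.
   Context: For a coefficient array $(h_{n,m})_{n\in\mathbb{Z}_+,m\in\mathbb{Z}}$ (identified with $h(x,t)=\sum h_{n,m}e_n(x)e(mt)$, where $e_n(x)=\sin(n\pi|x|)/|x|$ on the unit ball of $\mathbb{R}^3$ and $e(y)=e^{2\pi iy}$), $|||h|||_{0,\frac12;T}\le1$ means $h_{n,m}=\frac{a_{n,m}}{(|n^2-m|+\frac1T)^{1/2}}+\frac{a_n}{|n^2-m|}\mathbf{1}_{|n^2-m|>1/T}$ for some $(a_{n,m})$, $(a_n)$ with $\sum_{n,m}|a_{n,m}|^2\le1$, $\sum_n|a_n|^2\le1$; $|||\cdot|||_{0,\frac12;T}$ is the gauge (norm) of this convex set. *)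

(* Defs.v *)
From Stdlib Require Import Reals ZArith.
From Coquelicot Require Import Coquelicot.
Open Scope R_scope.

(* A coefficient array (h_{n,m}), n in Z_+ (encoded as n : nat, only n >= 1
   is used), m in Z, with complex values. *)
Definition coef := nat -> Z -> C.

Definition dist2 (n : nat) (m : Z) : R :=
  IZR (Z.abs (Z.of_nat n * Z.of_nat n - m)).

(* index j in [0, 2N] encodes m = j - N in [-N, N] *)
Definition midx (N j : nat) : Z := (Z.of_nat j - Z.of_nat N)%Z.

Definition sq_partial (a : coef) (N : nat) : R :=
  sum_n_m (fun n => sum_n (fun j => (Cmod (a n (midx N j)))^2) (2 * N)) 1 N.

(* |||h|||_{0,1/2;T} <= 1 *)
Definition in_unit_ball (T : R) (h : coef) : Prop :=
  exists (a : coef) (an : nat -> C),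
    (forall N, sq_partial a N <= 1) /\
    (forall N, sum_n_m (fun n => (Cmod (an n))^2) 1 N <= 1) /\
    forall (n : nat) (m : Z), (1 <= n)%nat ->
      h n m = Cplus (Cdiv (a n m) (RtoC (sqrt (dist2 n m + / T))))
                    (if Rlt_dec (/ T) (dist2 n m)
                     then Cdiv (an n) (RtoC (dist2 n m)) else RtoC 0).

(* the gauge (Minkowski functional) of that convex set; +oo if h lies in no
   dilate of it *)
Definition gauge (T : R) (h : coef) : Rbar :=
  Glb_Rbar (fun l => 0 < l /\ in_unit_ball T (fun n m => Cdiv (h n m) (RtoC l))).

Definition pair_partial (f g : coef) (N : nat) : C :=
  sum_n_m (fun n => sum_n (fun j => Cmult (f n (midx N j)) (g n (midx N j))) (2 * N)) 1 N.

(* Main.v *)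
Require Import Defs.
From Stdlib Require Import Reals ZArith Lra Lia Psatz Classical.
From Coquelicot Require Import Coquelicot.
Open Scope R_scope.

Definition SQ {G : AbelianMonoid} (h : nat -> Z -> G) (N : nat) : G :=
  sum_n_m (fun n => sum_n (fun j => h n (midx N j)) (2 * N)) 1 N.
Definition Dd {G : AbelianMonoid} (h : nat -> Z -> G) (N : nat) : G :=
  plus (sum_n_m (fun n => plus (h n (- (Z.of_nat N + 1))%Z) (h n (Z.of_nat N + 1)%Z)) 1 N)
       (sum_n (fun j => h (S N) (midx (S N) j)) (2 * S N)).

Lemma sum_n_SS {G : AbelianMonoid} (a : nat -> G) k :
  sum_n a (S (S k)) = plus (a 0%nat) (plus (sum_n (fun j => a (S j)) k) (a (S (S k)))).
Proof.
  rewrite sum_Sn. unfold sum_n. rewrite (sum_Sn_m a 0 (S k)) by lia.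
  rewrite sum_n_m_S. now rewrite plus_assoc.
Qed.

Lemma SQ_S {G : AbelianMonoid} (h : nat -> Z -> G) N : SQ h (S N) = plus (SQ h N) (Dd h N).
Proof.
  unfold SQ, Dd. rewrite sum_n_Sm by lia. rewrite plus_assoc. f_equal.
  rewrite <- sum_n_m_plus. apply sum_n_m_ext. intros n.
  replace (2 * S N)%nat with (S (S (2 * N))) by lia. rewrite sum_n_SS.
  assert (E1 : midx (S N) 0 = (- (Z.of_nat N + 1))%Z) by (unfold midx; lia).
  assert (E2 : midx (S N) (S (S (2 * N))) = (Z.of_nat N + 1)%Z) by (unfold midx; lia).
  assert (E3 : forall j, midx (S N) (S j) = midx N j) by (intros; unfold midx; lia).
  rewrite E1, E2. rewrite (sum_n_ext _ (fun j => h n (midx N j))) by (intros; now rewrite E3).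
  set (A := h n _). set (B := sum_n _ _). set (C0 := h n (_ + _)%Z).
  rewrite (plus_comm A). rewrite <- plus_assoc. f_equal. apply plus_comm.
Qed.

Lemma SQ_0 {G : AbelianMonoid} (h : nat -> Z -> G) : SQ h 0 = zero.
Proof. unfold SQ. apply sum_n_m_zero. lia. Qed.

Lemma SQ_sum {G : AbelianMonoid} (h : nat -> Z -> G) N : SQ h (S N) = sum_n (Dd h) N.
Proof.
  induction N.
  - rewrite SQ_S, SQ_0, sum_O. apply plus_zero_l.
  - rewrite SQ_S, IHN, sum_Sn. reflexivity.
Qed.

Lemma sum_n_m_nonneg (a : nat -> R) n m : (forall k, 0 <= a k) -> 0 <= sum_n_m a n m.
Proof.
  intros H. apply Rle_trans with (sum_n_m (fun _ => 0) n m).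
  - rewrite (sum_n_m_const_zero (G:=R_AbelianMonoid)). apply Rle_refl.
  - now apply sum_n_m_le.
Qed.

Lemma Dd_nonneg (h : nat -> Z -> R) N : (forall n m, 0 <= h n m) -> 0 <= Dd h N.
Proof.
  intros H. unfold Dd. apply Rplus_le_le_0_compat.
  - apply sum_n_m_nonneg. intros; apply Rplus_le_le_0_compat; auto.
  - apply sum_n_m_nonneg. intros; auto.
Qed.

Lemma Dd_norm (h : nat -> Z -> C) N :
  norm (Dd h N) <= Dd (fun n m => norm (h n m)) N.
Proof.
  unfold Dd. eapply Rle_trans. apply (@norm_triangle C_AbsRing C_NormedModule).
  apply Rplus_le_compat.
  - eapply Rle_trans. apply (@norm_sum_n_m C_AbsRing C_NormedModule). apply sum_n_m_le. intros; apply (@norm_triangle C_AbsRing C_NormedModule).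
  - apply (@norm_sum_n_m C_AbsRing C_NormedModule).
Qed.

Lemma filterlim_pred : filterlim pred eventually eventually.
Proof.
  intros P [N HN]. exists (S N). intros n Hn. apply HN. lia.
Qed.

Lemma conv (h : nat -> Z -> C) (M : R) :
  (forall N, SQ (fun n m => norm (h n m)) N <= M) ->
  exists L, filterlim (SQ h) eventually (locally L) /\ norm L <= M.
Proof.
  intros HM.
  set (ha := fun n m => norm (h n m)).
  assert (Hs : ex_series (Dd ha)).
  { assert (Hf : ex_finite_lim_seq (sum_n (Dd ha))).
    { apply ex_finite_lim_seq_incr with M.
      - intros n. rewrite sum_Sn. simpl. pose proof (Dd_nonneg ha (S n)).
        assert (0 <= Dd ha (S n)). apply Dd_nonneg. intros; apply norm_ge_0.
        unfold plus; simpl. lra.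
      - intros n. rewrite <- SQ_sum. apply HM. }
    destruct Hf as [l Hl]. exists l. exact Hl. }
  assert (Hs2 : ex_series (Dd h)).
  { apply (@ex_series_le C_AbsRing C_CompleteNormedModule) with (Dd ha). intros n. apply Dd_norm. exact Hs. }
  destruct Hs2 as [L HL]. exists L. split.
  - apply filterlim_ext_loc with (fun N => sum_n (Dd h) (pred N)).
    + exists 1%nat. intros n Hn. destruct n. lia. simpl. now rewrite SQ_sum.
    + eapply filterlim_comp. apply filterlim_pred. exact HL.
  - assert (H1 : is_lim_seq (fun N => norm (sum_n (Dd h) N)) (norm L)).
    { eapply filterlim_comp. exact HL. apply filterlim_norm. }
    assert (Hb : forall N, norm (sum_n (Dd h) N) <= M).
    { intros N.
    eapply Rle_trans. apply (@norm_sum_n_m C_AbsRing C_NormedModule).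
    eapply Rle_trans. apply sum_n_m_le. intros k. apply Dd_norm.
    fold ha. change (sum_n (Dd ha) N <= M). rewrite <- SQ_sum. apply HM. }
    exact (is_lim_seq_le _ _ _ _ Hb H1 (is_lim_seq_const M)).
Qed.

Definition Q (x w : R) : R := / Rmax w (x - /2).
Definition Psi (x w : R) : R := if Rle_dec 0 w then - Q x w else Q x (- w) - 2 * Q x 0.

Lemma Rmax_ge_r a b : b <= Rmax a b.
Proof. unfold Rmax; destruct Rle_dec; lra. Qed.

Lemma Q_pos x w : 1 <= x -> 0 < Q x w.
Proof. intros Hx. unfold Q. apply Rinv_0_lt_compat. pose proof (Rmax_ge_r w (x - /2)). lra. Qed.

Lemma Q_anti x a b : 1 <= x -> a <= b -> Q x b <= Q x a.
Proof.
  intros Hx Hab. unfold Q. apply Rinv_le_contravar.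
  - pose proof (Rmax_ge_r a (x - /2)). lra.
  - unfold Rmax; destruct Rle_dec; destruct Rle_dec; lra.
Qed.

Lemma Psi_neg x w : w <= 0 -> Psi x w = Q x (- w) - 2 * Q x 0.
Proof.
  intros Hw. unfold Psi. destruct Rle_dec.
  - assert (w = 0) by lra. subst. rewrite Ropp_0. lra.
  - reflexivity.
Qed.

Lemma Psi_pos x w : 0 <= w -> Psi x w = - Q x w.
Proof. intros Hw. unfold Psi. destruct Rle_dec; [reflexivity | lra]. Qed.

Lemma Psi_bounds x w : 1 <= x -> - 2 * Q x 0 <= Psi x w <= 0.
Proof.
  intros Hx. destruct (Rle_dec 0 w).
  - rewrite Psi_pos by lra. pose proof (Q_pos x w Hx). pose proof (Q_anti x 0 w Hx r). lra.
  - rewrite Psi_neg by lra. pose proof (Q_pos x (-w) Hx). pose proof (Q_anti x 0 (-w) Hx).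
    pose proof (Q_pos x 0 Hx). lra.
Qed.

Lemma key1 x v : 1 <= x -> /2 <= v ->
  (if Rlt_dec x v then / v ^ 2 else 0) <= Q x (v - /2) - Q x (v + /2).
Proof.
  intros Hx Hv. destruct Rlt_dec.
  - unfold Q. rewrite Rmax_left by lra. rewrite Rmax_left by lra.
    assert (0 < v - /2) by lra.
    apply Rle_trans with (/ (v - /2) * / (v + /2) * 1).
    + rewrite <- Rinv_mult. rewrite Rmult_1_r. apply Rinv_le_contravar.
      * apply Rmult_lt_0_compat; lra.
      * nra.
    + right. field. lra.
  - pose proof (Q_anti x (v - /2) (v + /2) Hx). lra.
Qed.

Lemma pt x u : 1 <= x ->
  (if Rlt_dec x (Rabs u) then / (Rabs u) ^ 2 else 0) <= Psi x (u + /2) - Psi x (u - /2).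
Proof.
  intros Hx. destruct (Rle_dec (/2) u).
  - rewrite Rabs_right by lra. rewrite !Psi_pos by lra. pose proof (key1 x u Hx r). lra.
  - destruct (Rle_dec u (-/2)).
    + rewrite Rabs_left by lra. rewrite !Psi_neg by lra.
      pose proof (key1 x (-u) Hx ltac:(lra)).
      replace (- (u + /2)) with (- u - /2) by ring. replace (- (u - /2)) with (- u + /2) by ring. lra.
    + destruct Rlt_dec as [Hl|Hl].
      * exfalso. assert (Rabs u < 1) by (apply Rabs_def1; lra). lra.
      * rewrite Psi_pos by lra. rewrite Psi_neg by lra.
        pose proof (Q_anti x 0 (u + /2) Hx ltac:(lra)).
        pose proof (Q_anti x 0 (- (u - /2)) Hx ltac:(lra)). pose proof (Q_pos x 0 Hx). lra.
Qed.

Lemma telesc (g : nat -> R) k : sum_n (fun j => g (S j) - g j) k = g (S k) - g 0%nat.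
Proof.
  induction k.
  - rewrite sum_O. reflexivity.
  - rewrite sum_Sn, IHk. unfold plus; simpl. ring.
Qed.

Definition wt (T : R) (n : nat) (m : Z) : R :=
  if Rlt_dec (/ T) (dist2 n m) then / (dist2 n m) ^ 2 else 0.

Lemma dist2_eq n m : dist2 n m = Rabs (IZR m - IZR (Z.of_nat n * Z.of_nat n)).
Proof.
  unfold dist2. rewrite abs_IZR, minus_IZR. apply Rabs_minus_sym.
Qed.

Lemma wsum T n N : 0 < T <= 1 ->
  sum_n (fun j => wt T n (midx N j)) (2 * N) <= 4 * T.
Proof.
  intros HT. set (x := / T). set (c := IZR (Z.of_nat n * Z.of_nat n)).
  assert (Hx : 1 <= x). { unfold x. rewrite <- Rinv_1. apply Rinv_le_contravar; lra. }
  assert (HxT : x * T = 1) by (unfold x; field; lra).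
  set (g := fun j => Psi x (IZR (midx N j) - c - /2)).
  apply Rle_trans with (sum_n (fun j => g (S j) - g j) (2 * N)).
  - apply sum_n_m_le. intros j. unfold g, wt. rewrite dist2_eq. fold c. fold x.
    assert (E : IZR (midx N (S j)) = IZR (midx N j) + 1).
    { rewrite <- plus_IZR. f_equal. unfold midx. lia. }
    rewrite E.
    pose proof (pt x (IZR (midx N j) - c) Hx) as Hp.
    replace (IZR (midx N j) - c + /2) with (IZR (midx N j) + 1 - c - /2) in Hp by lra.
    exact Hp.
  - rewrite telesc. unfold g.
    pose proof (Psi_bounds x (IZR (midx N (S (2 * N))) - c - /2) Hx).
    pose proof (Psi_bounds x (IZR (midx N 0) - c - /2) Hx).
    assert (Q x 0 <= 2 * T).
    { unfold Q. rewrite Rmax_right by lra.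
      assert (0 < x - /2) by lra.
      apply Rmult_le_reg_l with (x - /2); auto. rewrite Rinv_r by lra. nra. }
    lra.
Qed.

Lemma sum_R_plus (u v : nat -> R) n m :
  sum_n_m (fun k => u k + v k) n m = sum_n_m u n m + sum_n_m v n m.
Proof. exact (sum_n_m_plus (G:=R_AbelianMonoid) u v n m). Qed.

Lemma sum_R_scal (c : R) (u : nat -> R) n m :
  sum_n_m (fun k => c * u k) n m = c * sum_n_m u n m.
Proof. exact (sum_n_m_mult_l (K:=R_Ring) c u n m). Qed.

Lemma sum_le_loc (a b : nat -> R) n m :
  (forall k, (n <= k <= m)%nat -> a k <= b k) -> sum_n_m a n m <= sum_n_m b n m.
Proof.
  intros H. rewrite (sum_n_m_ext_loc a (fun k => Rmin (a k) (b k))).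
  - apply sum_n_m_le. intros; apply Rmin_r.
  - intros k Hk. rewrite Rmin_left; auto.
Qed.

Lemma SQ_scal (c : R) (h : nat -> Z -> R) N :
  SQ (fun n m => c * h n m) N = c * SQ h N.
Proof.
  unfold SQ. rewrite <- sum_R_scal. apply sum_n_m_ext. intros n.
  unfold sum_n. apply sum_R_scal.
Qed.

Lemma dist2_nonneg n m : 0 <= dist2 n m.
Proof. unfold dist2. apply IZR_le. apply Z.abs_nonneg. Qed.

Lemma ptb T (a : C) (b : C) d :
  0 < T <= 1 -> 0 <= d ->
  Cmod (Cplus (Cdiv a (RtoC (sqrt (d + / T))))
          (if Rlt_dec (/ T) d then Cdiv b (RtoC d) else RtoC 0)) ^ 2
  <= 2 * T * Cmod a ^ 2 + 2 * Cmod b ^ 2 * (if Rlt_dec (/ T) d then / d ^ 2 else 0).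
Proof.
  intros HT Hd.
  assert (HiT : 0 < / T) by (apply Rinv_0_lt_compat; lra).
  set (s := sqrt (d + / T)).
  assert (Hs : 0 < s) by (apply sqrt_lt_R0; lra).
  assert (Hs2 : s * s = d + / T) by (apply sqrt_sqrt; lra).
  assert (HA : Cmod (Cdiv a (RtoC s)) = Cmod a / s).
  { rewrite Cmod_div. rewrite Cmod_R, Rabs_right by lra. reflexivity.
    intros E. apply RtoC_inj in E. lra. }
  assert (HA2 : (Cmod a / s) ^ 2 <= T * Cmod a ^ 2).
  { assert (/ (s * s) <= T).
    { rewrite Hs2. rewrite <- (Rinv_inv T) at 2. apply Rinv_le_contravar; lra. }
    replace ((Cmod a / s) ^ 2) with (Cmod a ^ 2 * / (s * s)) by (field; lra).
    pose proof (pow2_ge_0 (Cmod a)). nra. }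
  pose proof (Cmod_ge_0 a). pose proof (Cmod_ge_0 b).
  assert (Hs0 : 0 <= Cmod a / s) by (apply Rdiv_le_0_compat; lra).
  destruct Rlt_dec as [Hl|Hl].
  - assert (Hd0 : 0 < d) by lra.
    assert (HB : Cmod (Cdiv b (RtoC d)) = Cmod b / d).
    { rewrite Cmod_div. rewrite Cmod_R, Rabs_right by lra. reflexivity.
      intros E. apply RtoC_inj in E. lra. }
    pose proof (Cmod_triangle (Cdiv a (RtoC s)) (Cdiv b (RtoC d))) as Ht.
    rewrite HA, HB in Ht. pose proof (Cmod_ge_0 (Cplus (Cdiv a (RtoC s)) (Cdiv b (RtoC d)))).
    assert (HB2 : (Cmod b / d) ^ 2 = Cmod b ^ 2 * / d ^ 2) by (field; lra).
    assert (0 <= Cmod b / d) by (apply Rdiv_le_0_compat; lra).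
    fold s.
    set (X := Cmod (Cplus (Cdiv a (RtoC s)) (Cdiv b (RtoC d)))) in *. set (A := Cmod a / s) in *. set (B := Cmod b / d) in *.
    assert (X ^ 2 <= (A + B) ^ 2) by (apply pow_incr; lra).
    assert ((A + B) ^ 2 <= 2 * A ^ 2 + 2 * B ^ 2) by (pose proof (pow2_ge_0 (A - B)); nra).
    assert (2 * Cmod b ^ 2 * / d ^ 2 = 2 * B ^ 2) by (rewrite HB2; ring). lra.
  - pose proof (Cmod_triangle (Cdiv a (RtoC s)) (RtoC 0)) as Ht.
    rewrite HA, Cmod_R, Rabs_R0 in Ht. fold s.
    pose proof (Cmod_ge_0 (Cplus (Cdiv a (RtoC s)) (RtoC 0))).
    set (X := Cmod (Cplus (Cdiv a (RtoC s)) (RtoC 0))) in *. set (A := Cmod a / s) in *.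
    assert (X ^ 2 <= (A + 0) ^ 2) by (apply pow_incr; lra).
    rewrite Rplus_0_r in H2. rewrite Rmult_0_r, Rplus_0_r. assert (0 <= T * Cmod a ^ 2) by (apply Rmult_le_pos; [lra|apply pow2_ge_0]). lra.
Qed.

Lemma ball_sq T (phi : coef) N : 0 < T <= 1 -> in_unit_ball T phi ->
  SQ (fun n m => Cmod (phi n m) ^ 2) N <= 10 * T.
Proof.
  intros HT [a [an [Ha [Han Hphi]]]].
  unfold SQ.
  apply Rle_trans with
    (sum_n_m (fun n => 2 * T * sum_n (fun j => Cmod (a n (midx N j)) ^ 2) (2 * N)
                       + 8 * T * Cmod (an n) ^ 2) 1 N).
  - apply sum_le_loc. intros n Hn.
    apply Rle_trans with (sum_n (fun j => 2 * T * Cmod (a n (midx N j)) ^ 2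
                 + 2 * Cmod (an n) ^ 2 * wt T n (midx N j)) (2 * N)).
    + apply sum_n_m_le. intros j. rewrite Hphi by lia. unfold wt.
      apply ptb; auto. apply dist2_nonneg.
    + unfold sum_n. rewrite sum_R_plus, sum_R_scal, sum_R_scal.
      pose proof (wsum T n N HT). unfold sum_n in H.
      pose proof (pow2_ge_0 (Cmod (an n))). nra.
  - rewrite sum_R_plus, sum_R_scal, sum_R_scal.
    specialize (Ha N). specialize (Han N). unfold sq_partial in Ha. nra.
Qed.

Lemma ball_pair T (phi gam : coef) N : 0 < T <= 1 -> in_unit_ball T phi -> in_unit_ball T gam ->
  SQ (fun n m => Cmod (phi n m) * Cmod (gam n m)) N <= 10 * T.
Proof.
  intros HT H1 H2.
  pose proof (ball_sq T phi N HT H1). pose proof (ball_sq T gam N HT H2).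
  apply Rle_trans with (SQ (fun n m => / 2 * (Cmod (phi n m) ^ 2 + Cmod (gam n m) ^ 2)) N).
  - unfold SQ. apply sum_n_m_le. intros n. apply sum_n_m_le. intros j.
    pose proof (pow2_ge_0 (Cmod (phi n (midx N j)) - Cmod (gam n (midx N j)))). nra.
  - rewrite SQ_scal. unfold SQ in *.
    rewrite (sum_n_m_ext _ (fun n => sum_n (fun j => Cmod (phi n (midx N j)) ^ 2) (2 * N)
         + sum_n (fun j => Cmod (gam n (midx N j)) ^ 2) (2 * N))).
    + rewrite sum_R_plus. lra.
    + intros n. unfold sum_n. apply sum_R_plus.
Qed.

Lemma SQ_ext (h1 h2 : nat -> Z -> R) N : (forall n m, h1 n m = h2 n m) -> SQ h1 N = SQ h2 N.
Proof.
  intros H. unfold SQ. apply sum_n_m_ext. intros n. apply sum_n_m_ext. intros j. apply H.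
Qed.

Lemma Cmod_scale (z : C) (l : R) : 0 < l -> Cmod z = l * Cmod (Cdiv z (RtoC l)).
Proof.
  intros Hl. rewrite Cmod_div. rewrite Cmod_R, Rabs_right by lra. field. lra.
  intros E. apply RtoC_inj in E. lra.
Qed.

Lemma rep_bound T (f g : coef) l l' : 0 < T <= 1 -> 0 < l -> 0 < l' ->
  in_unit_ball T (fun n m => Cdiv (f n m) (RtoC l)) ->
  in_unit_ball T (fun n m => Cdiv (g n m) (RtoC l')) ->
  exists L, filterlim (pair_partial f g) eventually (locally L) /\ Cmod L <= 10 * T * l * l'.
Proof.
  intros HT Hl Hl' H1 H2.
  destruct (conv (fun n m => Cmult (f n m) (g n m)) (10 * T * l * l')) as [L [HL HB]].
  - intros N.
    rewrite (SQ_ext _ (fun n m => (l * l') * (Cmod (Cdiv (f n m) (RtoC l)) * Cmod (Cdiv (g n m) (RtoC l'))))).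
    + rewrite SQ_scal. pose proof (ball_pair T _ _ N HT H1 H2).
      assert (0 < l * l') by nra. nra.
    + intros n m. change (Cmod (Cmult (f n m) (g n m)) = l * l' * (Cmod (Cdiv (f n m) (RtoC l)) * Cmod (Cdiv (g n m) (RtoC l')))). rewrite Cmod_mult.
      rewrite (Cmod_scale (f n m) l Hl), (Cmod_scale (g n m) l' Hl'). ring.
  - exists L. split. exact HL. exact HB.
Qed.

Lemma glb_pick (S : R -> Prop) G : is_glb_Rbar S (Finite G) ->
  forall eps, 0 < eps -> exists l, S l /\ l < G + eps.
Proof.
  intros [Hlb Hg] eps He. apply NNPP. intros Hn.
  assert (Hlb2 : is_lb_Rbar S (Finite (G + eps))).
  { intros x Hx. simpl. destruct (Rle_dec (G + eps) x) as [r|r]; auto.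
    exfalso. apply Hn. exists x. split; auto. lra. }
  specialize (Hg _ Hlb2). simpl in Hg. lra.
Qed.

Lemma eps_lemma c K G H : 0 <= K -> 0 <= G -> 0 <= H ->
  (forall e, 0 < e -> c <= K * (G + e) * (H + e)) -> c <= K * G * H.
Proof.
  intros HK HG HH Hc. destruct (Rle_dec c (K * G * H)) as [r|r]; auto. exfalso.
  set (d := c - K * G * H). assert (Hd : 0 < d) by (unfold d; lra).
  set (P := K * (G + H + 1) + 1). assert (HP : 0 < P) by (unfold P; nra).
  set (e := Rmin 1 (d / P)).
  assert (He : 0 < e) by (unfold e; apply Rmin_glb_lt; [lra | apply Rdiv_lt_0_compat; lra]).
  assert (He1 : e <= 1) by apply Rmin_l.
  assert (HeP : e * P <= d).
  { assert (e <= d / P) by apply Rmin_r.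
    apply Rmult_le_compat_r with (r := P) in H0; [|lra].
    unfold Rdiv in H0. rewrite Rmult_assoc, Rinv_l in H0 by lra. lra. }
  specialize (Hc e He).
  assert (K * (G + e) * (H + e) = K * G * H + K * e * (G + H + e)) by ring.
  assert (K * e * (G + H + e) <= K * e * (G + H + 1)).
  { apply Rmult_le_compat_l. nra. lra. }
  assert (K * e * (G + H + 1) < e * P) by (unfold P; nra).
  unfold d in HeP. lra.
Qed.

Lemma gauge_info T h G : gauge T h = Finite G ->
  0 <= G /\ forall eps, 0 < eps -> exists l, 0 < l /\ l < G + eps /\
     in_unit_ball T (fun n m => Cdiv (h n m) (RtoC l)).
Proof.
  intros Hg. unfold gauge in Hg.
  pose proof (Glb_Rbar_correct (fun l => 0 < l /\ in_unit_ball T (fun n m => Cdiv (h n m) (RtoC l)))) as Hc.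
  rewrite Hg in Hc. split.
  - destruct Hc as [_ Hc]. assert (Hlb : is_lb_Rbar (fun l => 0 < l /\ in_unit_ball T (fun n m => Cdiv (h n m) (RtoC l))) (Finite 0)).
    { intros x [Hx _]. simpl. lra. }
    specialize (Hc _ Hlb). simpl in Hc. exact Hc.
  - intros eps He. destruct (glb_pick _ _ Hc eps He) as [l [[H1 H2] H3]].
    exists l. auto.
Qed.

Theorem lemma2p3 :
  exists C0 : R, 0 < C0 /\
    forall (T : R) (f g : coef) (Gf Gg : R),
      0 < T <= 1 ->
      gauge T f = Finite Gf ->
      gauge T g = Finite Gg ->
      exists L : C,
        filterlim (pair_partial f g) eventually (locally L) /\
        Cmod L <= C0 * T * Gf * Gg.
Proof.
  exists 10. split; [lra|]. intros T f g Gf Gg HT Hf Hg.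
  destruct (gauge_info T f Gf Hf) as [Gf0 Pf].
  destruct (gauge_info T g Gg Hg) as [Gg0 Pg].
  destruct (Pf 1 Rlt_0_1) as [l0 [Hl0 [_ Hb0]]].
  destruct (Pg 1 Rlt_0_1) as [l0' [Hl0' [_ Hb0']]].
  destruct (rep_bound T f g l0 l0' HT Hl0 Hl0' Hb0 Hb0') as [L [HL _]].
  exists L. split; [exact HL|].
  apply eps_lemma; try lra.
  intros e He.
  destruct (Pf e He) as [l [Hl [Hle Hb]]].
  destruct (Pg e He) as [l' [Hl' [Hle' Hb']]].
  destruct (rep_bound T f g l l' HT Hl Hl' Hb Hb') as [L' [HL' HB']].
  assert (E : L = L') by exact (@filterlim_locally_unique nat C_AbsRing C_NormedModule eventually (Proper_StrongProper _ eventually_filter) _ L L' HL HL').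
  subst L'. eapply Rle_trans; [exact HB'|].
  assert (0 <= 10 * T) by lra.
  apply Rmult_le_compat; try nra.
Qed.
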